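(* Let $D_{2n}$ be the set of all Dyck words of length $2n$. Then $\mathrm{rpn}(D_{2n}) \geq n^{\Omega(\log n)}$.
   Context: The set $D\subseteq\{0,1\}^*$ of Dyck words is the smallest set with $\epsilon\in D$ and such that $v,w\in D$ implies $vw\in D$ and $0w1\in D$ (equivalently: words with equally many zeros and ones in which every prefix contains no more ones than zeros). $D_{2n}=D\cap\{0,1\}^{2n}$. Regular expressions are built from $\epsilon$ and letters by union and concatenation (no $\emptyset$); $\mathrm{rpn}(L)$ is the minimum number of syntax-tree nodes of an expression describing $L$. *)

(* Defs.v *)
(* Letters: 0 = false, 1 = true. *)
From Stdlib Require Import Reals List.
Import ListNotations.
Open Scope R_scope.

(* Regular expressions built from epsilon and letters by union and
   concatenation (no empty-set symbol). *)
Inductive regex : Type :=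
| REps : regex
| RLit : bool -> regex
| RUnion : regex -> regex -> regex
| RConcat : regex -> regex -> regex.

Fixpoint rsize (r : regex) : nat :=
  match r with
  | REps => 1
  | RLit _ => 1
  | RUnion r1 r2 => S (rsize r1 + rsize r2)
  | RConcat r1 r2 => S (rsize r1 + rsize r2)
  end%nat.

Fixpoint matches (r : regex) (w : list bool) : Prop :=
  match r with
  | REps => w = []
  | RLit b => w = [b]
  | RUnion r1 r2 => matches r1 w \/ matches r2 w
  | RConcat r1 r2 => exists u v, w = u ++ v /\ matches r1 u /\ matches r2 v
  end.

Definition describes (r : regex) (L : list bool -> Prop) : Prop :=
  forall w, matches r w <-> L w.

Definition is_rpn (L : list bool -> Prop) (m : nat) : Prop :=
  (exists r, describes r L /\ rsize r = m) /\
  (forall r, describes r L -> (m <= rsize r)%nat).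

Inductive dyck : list bool -> Prop :=
| dyck_nil : dyck []
| dyck_cat : forall v w, dyck v -> dyck w -> dyck (v ++ w)
| dyck_wrap : forall w, dyck w -> dyck ([false] ++ w ++ [true]).

Definition D2n (n : nat) : list bool -> Prop :=
  fun w => dyck w /\ length w = (2 * n)%nat.

(* Main.v *)
Require Import Defs.
From Stdlib Require Import Reals Lra Psatz.
From Stdlib Require Import ZArith.
From mathcomp Require Import ssreflect ssrfun ssrbool eqtype ssrnat seq div prime binomial bigop.
From mathcomp Require Import zify ring.
Set Implicit Arguments. Unset Strict Implicit. Unset Printing Implicit Defensive.
Local Open Scope nat_scope.

Fixpoint allw (n : nat) : seq (seq bool) :=
  if n is k.+1 then map (cons false) (allw k) ++ map (cons true) (allw k) else [:: [::]].

Definition cnt (P : pred (seq bool)) n := count P (allw n).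

Lemma size_allw n : size (allw n) = 2 ^ n.
Proof. elim: n => //= n IH; rewrite size_cat !size_map IH expnS; lia. Qed.

Lemma mem_allw n w : (w \in allw n) = (size w == n).
Proof.
elim: n w => [|n IH] [|b w] //=.
- by rewrite mem_cat; apply/negbTE; rewrite negb_or; apply/andP; split; apply/mapP => -[].
- rewrite mem_cat eqSS -IH; case: b.
  + rewrite (mem_map (fun x y => _)) /=; last by move=> x y [].
    by apply/orP/idP => [[/mapP[] //|//]|->]; right.
  + rewrite (mem_map (fun x y => _)) /=; last by move=> x y [].
    by apply/orP/idP => [[//|/mapP[] //]|->]; left.
Qed.

Lemma uniq_allw n : uniq (allw n).
Proof.
elim: n => //= n IH; rewrite cat_uniq !map_inj_uniq //; try by move=> x y [].
rewrite IH /= andbT; apply/hasPn => x /mapP[y _ ->]; apply/mapP => -[z _ //].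
Qed.

Lemma cnt_le P n : cnt P n <= 2 ^ n.
Proof. by rewrite /cnt -size_allw count_size. Qed.

Lemma cntS P n : cnt P n.+1 = cnt (fun w => P (false :: w)) n + cnt (fun w => P (true :: w)) n.
Proof. by rewrite /cnt /= count_cat !count_map. Qed.

Definition catp a (X Y : pred (seq bool)) : pred (seq bool) :=
  fun w => X (take a w) && Y (drop a w).

Lemma cnt_catp a b X Y : cnt (catp a X Y) (a + b) = cnt X a * cnt Y b.
Proof.
elim: a X => [|a IH] X.
  rewrite /catp /cnt /= addn0 add0n.
  under eq_count do rewrite take0 drop0.
  case: (X [::]) => /=; first by rewrite mul1n.
  by rewrite mul0n count_pred0.
rewrite addSn cntS (cntS X) mulnDl -!IH.
by congr (_ + _).
Qed.

Lemma eq_cnt n (P Q : pred (seq bool)) : (forall w, size w = n -> P w = Q w) -> cnt P n = cnt Q n.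
Proof. move=> H; apply: eq_in_count => w; rewrite mem_allw => /eqP; exact: H. Qed.

Lemma le_cnt n (P Q : pred (seq bool)) : (forall w, size w = n -> P w -> Q w) -> cnt P n <= cnt Q n.
Proof.
move=> H; rewrite /cnt -!size_filter; apply: uniq_leq_size; first by rewrite filter_uniq // uniq_allw.
move=> w; rewrite !mem_filter mem_allw => /andP[Pw /eqP sw].
by rewrite (H w sw Pw) sw eqxx.
Qed.

Definition wt (w : seq bool) := count id w.

Lemma cnt_wt n j : cnt (fun w => wt w == j) n = 'C(n, j).
Proof.
elim: n j => [|n IH] [|j] //=.
- rewrite cntS (@eq_cnt n (fun w => wt (false :: w) == 0) (fun w => wt w == 0)) //.
  rewrite (@eq_cnt n (fun w => wt (true :: w) == 0) pred0) //.
  by rewrite IH bin0 /cnt count_pred0.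
- rewrite cntS (@eq_cnt n (fun w => wt (false :: w) == j.+1) (fun w => wt w == j.+1)) //.
  rewrite (@eq_cnt n (fun w => wt (true :: w) == j.+1) (fun w => wt w == j)) //.
  by rewrite !IH binS.
Qed.
Lemma binC_odd k : 'C(k.*2.+1, k.+1) = 'C(k.*2.+1, k).
Proof. by rewrite -bin_sub; [congr 'C(_,_); lia | lia]. Qed.

Lemma bin_odd k : 'C(k.*2.+1, k) * k.+1 = 'C(k.*2, k) * k.*2.+1.
Proof. have := mul_bin_diag k.*2.+1 k; rewrite /= binC_odd; lia. Qed.

Lemma bin_even_step k : 'C(k.+1.*2, k.+1) = 2 * 'C(k.*2.+1, k).
Proof. by rewrite doubleS binS binC_odd; lia. Qed.

Lemma bin_central_up k : 'C(k.*2, k) ^ 2 * (3 * k + 1) <= 16 ^ k.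
Proof.
elim: k => [|k IH]; first by rewrite bin0.
set a := 'C(k.*2, k) in IH *.
set b := 'C(k.+1.*2, k.+1).
have hb : b * k.+1 = 2 * k.*2.+1 * a by rewrite /b bin_even_step -mulnA bin_odd; lia.
have hpos : 0 < k.+1 ^ 2 * (3 * k + 1) by rewrite muln_gt0 expn_gt0 /=; lia.
rewrite -(leq_pmul2r hpos).
have -> : b ^ 2 * (3 * k.+1 + 1) * (k.+1 ^ 2 * (3 * k + 1)) =
          (b * k.+1) ^ 2 * (3 * k.+1 + 1) * (3 * k + 1) by ring.
rewrite hb.
have -> : (2 * k.*2.+1 * a) ^ 2 * (3 * k.+1 + 1) * (3 * k + 1) =
          (a ^ 2 * (3 * k + 1)) * (4 * k.*2.+1 ^ 2 * (3 * k.+1 + 1)) by ring.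
apply: (leq_trans (leq_mul IH (leqnn _))).
rewrite [16 ^ k.+1]expnS.
have H : 4 * k.*2.+1 ^ 2 * (3 * k.+1 + 1) <= 16 * (k.+1 ^ 2 * (3 * k + 1)) by rewrite -!mul2n; nia.
apply: (leq_trans (leq_mul (leqnn (16 ^ k)) H)).
by rewrite mulnA (mulnC (16 ^ k) 16).
Qed.

Lemma bin_central_low k : 4 ^ k <= 'C(k.*2, k) * k.*2.+1.
Proof.
elim: k => [|k IH]; first by rewrite bin0.
set a := 'C(k.*2, k) in IH *.
set b := 'C(k.+1.*2, k.+1).
have hb : b * k.+1 = 2 * k.*2.+1 * a by rewrite /b bin_even_step -mulnA bin_odd; lia.
rewrite -(leq_pmul2r (ltn0Sn k)).
have -> : b * k.+1.*2.+1 * k.+1 = (b * k.+1) * k.+1.*2.+1 by ring.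
rewrite hb expnS.
have H1 : 4 * 4 ^ k * k.+1 <= 4 * (a * k.*2.+1) * k.+1 by rewrite leq_mul2r leq_mul2l IH orbT.
apply: (leq_trans H1).
have -> : 4 * (a * k.*2.+1) * k.+1 = (a * k.*2.+1) * (4 * k.+1) by ring.
have -> : 2 * k.*2.+1 * a * k.+1.*2.+1 = (a * k.*2.+1) * (2 * k.+1.*2.+1) by ring.
rewrite leq_mul2l; apply/orP; right; rewrite -!mul2n; lia.
Qed.

Lemma bin_odd_up k : 'C(k.*2.+1, k) ^ 2 * k.*2.+2 <= 4 ^ k.*2.+1.
Proof.
have E := bin_central_up k.
set a := 'C(k.*2, k) in E *.
set c := 'C(k.*2.+1, k).
have hc : c * k.+1 = a * k.*2.+1 by rewrite /c bin_odd.
have hpos : 0 < k.+1 ^ 2 * (3 * k + 1) by rewrite muln_gt0 expn_gt0 /=; lia.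
rewrite -(leq_pmul2r hpos).
have -> : c ^ 2 * k.*2.+2 * (k.+1 ^ 2 * (3 * k + 1)) = (c * k.+1) ^ 2 * k.*2.+2 * (3 * k + 1) by ring.
rewrite hc.
have -> : (a * k.*2.+1) ^ 2 * k.*2.+2 * (3 * k + 1) = (a ^ 2 * (3 * k + 1)) * (k.*2.+1 ^ 2 * k.*2.+2) by ring.
have -> : 4 ^ k.*2.+1 = 4 * 16 ^ k by rewrite expnS -mul2n expnM.
apply: (leq_trans (leq_mul E (leqnn _))).
have H : k.*2.+1 ^ 2 * k.*2.+2 <= 4 * (k.+1 ^ 2 * (3 * k + 1)) by rewrite -!mul2n; nia.
apply: (leq_trans (leq_mul (leqnn (16 ^ k)) H)).
rewrite mulnA (mulnC (16 ^ k) 4) mulnA //.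
Qed.

Lemma bin_unimodal n j : 'C(n, j) <= 'C(n, n./2).
Proof.
have up : forall i, i <= n./2 -> 'C(n, i) <= 'C(n, n./2).
  move=> i hi; rewrite -(subKn hi); elim: (n./2 - i) (leq_subr i n./2) => [|d IH] hd.
    by rewrite subn0.
  apply: leq_trans (IH (ltnW hd)).
  set i0 := n./2 - d.+1.
  have -> : n./2 - d = i0.+1 by rewrite /i0; lia.
  have := mul_bin_left n i0.
  have hn : i0.+1 <= n - i0 by rewrite /i0; lia.
  move=> E.
  have : i0.+1 * 'C(n, i0) <= i0.+1 * 'C(n, i0.+1).
    by rewrite E leq_mul2r hn orbT.
  by rewrite leq_mul2l.
case: (leqP j n./2) => hj; first exact: up.
case: (leqP j n) => hjn; last by rewrite bin_small.
rewrite -bin_sub //; apply: up; lia.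
Qed.

Lemma bin_bound n j : 'C(n, j) ^ 2 * n.+1 <= 4 ^ n.
Proof.
have H : 'C(n, j) ^ 2 * n.+1 <= 'C(n, n./2) ^ 2 * n.+1.
  by rewrite leq_mul2r leq_exp2r // bin_unimodal orbT.
apply: (leq_trans H).
rewrite -[n](odd_double_half n); case: (odd n) => /=.
- rewrite uphalf_double add1n; exact: bin_odd_up.
- rewrite add0n half_double.
  have E := bin_central_up n./2.
  have -> : 4 ^ (n./2).*2 = 16 ^ n./2 by rewrite -mul2n expnM.
  apply: leq_trans E; rewrite leq_mul2l; apply/orP; right; rewrite -mul2n; lia.
Qed.
Lemma appE (T : Type) (u v : list T) : app u v = cat u v.
Proof. by elim: u => //= x u ->. Qed.

Fixpoint mb (r : regex) (w : seq bool) : bool :=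
  match r with
  | REps => w == [::]
  | RLit b => w == [:: b]
  | RUnion r1 r2 => mb r1 w || mb r2 w
  | RConcat r1 r2 => has (fun i => mb r1 (take i w) && mb r2 (drop i w)) (iota 0 (size w).+1)
  end.

Lemma mb_cat r1 r2 u v : mb r1 u -> mb r2 v -> mb (RConcat r1 r2) (u ++ v).
Proof.
move=> h1 h2; apply/hasP; exists (size u).
  by rewrite mem_iota size_cat; lia.
by rewrite take_size_cat // drop_size_cat //; apply/andP.
Qed.

Lemma mb_catP r1 r2 w : mb (RConcat r1 r2) w -> exists u v, w = u ++ v /\ mb r1 u /\ mb r2 v.
Proof.
move=> /hasP[i _ /andP[h1 h2]]; exists (take i w), (drop i w).
by rewrite cat_take_drop.
Qed.

Lemma mbP r w : matches r w <-> mb r w.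
Proof.
elim: r w => [|b|r1 IH1 r2 IH2|r1 IH1 r2 IH2] w /=.
- by split => [->|/eqP].
- by split => [->|/eqP].
- by rewrite IH1 IH2; split => [[]->|/orP[]]; rewrite ?orbT //; [left|right].
- split.
  + move=> [u [v [-> [h1 h2]]]]; rewrite appE; apply: mb_cat; [exact/IH1|exact/IH2].
  + move/mb_catP => [u [v [-> [h1 h2]]]]; exists u, v; rewrite appE; split => //.
    by split; [exact/IH1|exact/IH2].
Qed.

Lemma mb_ne r : exists w, mb r w.
Proof.
elim: r => [|b|r1 [u h1] r2 _|r1 [u h1] r2 [v h2]].
- by exists [::].
- by exists [:: b]; rewrite /= eqxx.
- by exists u; rewrite /= h1.
- by exists (u ++ v); apply: mb_cat.
Qed.

Lemma rsize_pos r : 0 < rsize r.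
Proof. by case: r. Qed.

Definition kf m := trunc_log 2 m %/ 3.
Definition G m := 2 ^ 'C(kf m, 2).

Lemma G_pos m : 0 < G m.
Proof. by rewrite /G expn_gt0. Qed.

Lemma bin_le_pow n j : 'C(n, j) <= 2 ^ n.
Proof. rewrite -cnt_wt; exact: cnt_le. Qed.

Lemma kf_small m : m <= 1 -> kf m = 0.
Proof. by case: m => [|[|]]. Qed.

Lemma kf_step m l : m < 3 * l -> kf m <= (kf l).+1.
Proof.
move=> hml.
rewrite /kf.
case: (leqP 3 (trunc_log 2 m)) => ht; last by rewrite divn_small.
have hm : 0 < m by move: ht; case: (m) => //; rewrite trunc_log0.
have h1 := trunc_logP (isT : 1 < 2) hm.
have h2 : 2 ^ (trunc_log 2 m - 3) <= l.
  have : 2 ^ (trunc_log 2 m - 3) * 8 <= m.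
    by rewrite -(expnD 2 _ 3) subnK.
  move: (2 ^ (trunc_log 2 m - 3)) => X; lia.
have h3 := trunc_log_max (isT : 1 < 2) h2.
lia.
Qed.

Lemma pow_kf m : 2 ^ (3 * kf m) <= m \/ kf m = 0.
Proof.
case: (posnP m) => [->|hm]; first by right.
left; apply: leq_trans (trunc_logP (isT : 1 < 2) hm).
by rewrite leq_exp2l //; rewrite /kf; lia.
Qed.

Lemma NL o r l m ja jb :
  o + l + r = m -> m < 3 * l -> 3 * l <= 2 * m ->
  'C(o, ja) * 'C(r, jb) * G m <= G l * 2 ^ (o + r).
Proof.
move=> hs h1 h2.
have hk := kf_step h1.
rewrite /G.
case hK : (kf m) => [|K].
  rewrite bin0n /= muln1 expnD.
  apply: (@leq_trans (2 ^ o * 2 ^ r)); first by apply: leq_mul; exact: bin_le_pow.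
  by apply: leq_pmull; rewrite expn_gt0.
have hKl : K <= kf l by lia.
have hG : 2 ^ 'C(K.+1, 2) <= 2 ^ 'C(kf l, 2) * 2 ^ K.
  by rewrite -expnD leq_exp2l // binS bin1 leq_add2r leq_bin2l.
have h4 : 4 ^ K <= maxn o r.
  case: (pow_kf m) => [hp|]; last by rewrite hK.
  rewrite hK in hp.
  have : 6 * 4 ^ K <= 2 ^ (3 * K.+1).
    have -> : 2 ^ (3 * K.+1) = 8 * 8 ^ K by rewrite mulnS expnD expnM.
    have h48 : 4 ^ K <= 8 ^ K by case: (posnP K) => [->|hK0] //; rewrite leq_exp2r.
    lia.
  lia.
have key : forall n j, 4 ^ K <= n -> 'C(n, j) * 2 ^ K <= 2 ^ n.
  move=> n j hn.
  rewrite -leq_sqr expnMn -!expnM (mulnC K 2) (mulnC n 2) !expnM (_ : 2 ^ 2 = 4) //.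
  apply: leq_trans (bin_bound n j).
  by rewrite leq_mul2l (leq_trans hn) ?orbT.
apply: (leq_trans (leq_mul (leqnn _) hG)).
rewrite mulnCA leq_mul2l; apply/orP; right.
rewrite expnD.
case: (leqP r o) => hro.
- rewrite (maxn_idPl hro) in h4.
  rewrite mulnAC.
  apply: leq_mul; [exact: key | exact: bin_le_pow].
- rewrite (maxn_idPr (ltnW hro)) in h4.
  rewrite -mulnA.
  apply: leq_mul; [exact: bin_le_pow | exact: key].
Qed.

Definition MC m := forall u j, (forall w, mb u w -> size w = m /\ wt w = j) ->
  cnt (mb u) m * G m <= rsize u * 2 ^ m.

Lemma wt_cat u v : wt (u ++ v) = wt u + wt v.
Proof. by rewrite /wt count_cat. Qed.

Lemma cnt_cw (A : pred (seq bool)) o ja : (forall a, A a -> wt a = ja) -> cnt A o <= 'C(o, ja).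
Proof.
move=> h; rewrite -cnt_wt; apply: le_cnt => w _ /h ->; exact: eqxx.
Qed.

Lemma VL m (IHm : forall m', m' < m -> MC m') (A B : pred (seq bool)) x o l r j :
  (exists a, A a) -> (exists b, B b) ->
  (forall a, A a -> size a = o) -> (forall b, B b -> size b = r) ->
  (forall v, mb x v -> size v = l) ->
  (forall a v b, A a -> mb x v -> B b -> wt a + wt v + wt b = j) ->
  o + l + r = m -> m < 3 * l -> 3 * l <= 2 * m ->
  cnt A o * cnt (mb x) l * cnt B r * G m <= rsize x * 2 ^ m.
Proof.
move=> [a0 ha0] [b0 hb0] hA hB hx hw hs h1 h2.
have [v0 hv0] := mb_ne x.
have cA : cnt A o <= 'C(o, wt a0).
  apply: cnt_cw => a ha; have := hw a v0 b0 ha hv0 hb0; have := hw a0 v0 b0 ha0 hv0 hb0; lia.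
have cB : cnt B r <= 'C(r, wt b0).
  apply: cnt_cw => b hb; have := hw a0 v0 b ha0 hv0 hb; have := hw a0 v0 b0 ha0 hv0 hb0; lia.
have cx : cnt (mb x) l * G l <= rsize x * 2 ^ l.
  apply: (IHm l _ x (wt v0)); first by lia.
  move=> w hw'; split; first exact: hx.
  have := hw a0 w b0 ha0 hw' hb0; have := hw a0 v0 b0 ha0 hv0 hb0; lia.
have hN := NL (wt a0) (wt b0) hs h1 h2.
set cx' := cnt (mb x) l in cx *.
have e : cnt A o * cx' * cnt B r * G m = cx' * (cnt A o * cnt B r * G m) by ring.
rewrite e.
apply: (@leq_trans (cx' * ('C(o, wt a0) * 'C(r, wt b0) * G m))).
  by rewrite leq_mul2l; apply/orP; right; rewrite leq_mul2r; apply/orP; right; apply: leq_mul.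
apply: (@leq_trans (cx' * (G l * 2 ^ (o + r)))).
  by rewrite leq_mul2l hN orbT.
rewrite mulnA.
apply: (@leq_trans (rsize x * 2 ^ l * 2 ^ (o + r))).
  by rewrite leq_mul2r cx orbT.
by rewrite -mulnA -expnD; have -> : l + (o + r) = m by lia.
Qed.

Lemma concat_len x1 x2 l : (forall v, mb (RConcat x1 x2) v -> size v = l) ->
  exists l1 l2, [/\ l1 + l2 = l, (forall v, mb x1 v -> size v = l1) & (forall v, mb x2 v -> size v = l2)].
Proof.
move=> h.
have [v1 h1] := mb_ne x1; have [v2 h2] := mb_ne x2.
exists (size v1), (size v2); split.
- by rewrite -size_cat; apply: h; apply: mb_cat.
- move=> v hv; have := h _ (mb_cat hv h2); have := h _ (mb_cat h1 h2); rewrite !size_cat; lia.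
- move=> v hv; have := h _ (mb_cat h1 hv); have := h _ (mb_cat h1 h2); rewrite !size_cat; lia.
Qed.

Lemma cnt_concat x1 x2 l1 l2 : (forall v, mb x1 v -> size v = l1) ->
  cnt (mb (RConcat x1 x2)) (l1 + l2) = cnt (mb x1) l1 * cnt (mb x2) l2.
Proof.
move=> hx; rewrite -cnt_catp; apply: eq_cnt => w sw; apply/idP/idP.
- move/mb_catP => [u [v [-> [h1 h2]]]].
  by rewrite /catp take_size_cat ?drop_size_cat ?h1 ?h2 //; exact: hx.
- move/andP => [h1 h2]; rewrite -(cat_take_drop l1 w); exact: mb_cat.
Qed.

Lemma cnt_union x1 x2 l : cnt (mb (RUnion x1 x2)) l <= cnt (mb x1) l + cnt (mb x2) l.
Proof.
rewrite /cnt -count_predUI; apply: leq_trans (leq_addr _ _).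
by apply: sub_count => w.
Qed.

Lemma triv_bound (A B : pred (seq bool)) X o l r m :
  o + l + r = m -> kf m = 0 -> cnt A o * cnt X l * cnt B r * G m <= rsize (REps) * 2 ^ m.
Proof.
move=> hs hk; rewrite /G hk bin0n /= muln1 mul1n -hs !expnD.
by apply: leq_mul; [apply: leq_mul|]; exact: cnt_le.
Qed.

Lemma le_rsize_pow x m : 2 ^ m <= rsize x * 2 ^ m.
Proof. by apply: leq_pmull; exact: rsize_pos. Qed.

Lemma TL m (IHm : forall m', m' < m -> MC m') x : forall (A B : pred (seq bool)) o l r j,
  (exists a, A a) -> (exists b, B b) ->
  (forall a, A a -> size a = o) -> (forall b, B b -> size b = r) ->
  (forall v, mb x v -> size v = l) ->
  (forall a v b, A a -> mb x v -> B b -> wt a + wt v + wt b = j) ->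
  o + l + r = m -> 2 * m < 3 * l ->
  cnt A o * cnt (mb x) l * cnt B r * G m <= rsize x * 2 ^ m.
Proof.
elim: x => [|b|x1 IH1 x2 IH2|x1 IH1 x2 IH2] A B o l r j hA0 hB0 hA hB hx hw hs hl.
- have hl0 : l = 0 by rewrite -(hx [::]).
  apply: leq_trans (triv_bound A B _ hs (kf_small _)) _ => //; first by lia.
- have hl0 : l = 1 by rewrite -(hx [:: b]) //= eqxx.
  apply: leq_trans (triv_bound A B _ hs (kf_small _)) _; first by lia.
  by rewrite /= !mul1n.
- have hx1 : forall v, mb x1 v -> size v = l by move=> v hv; apply: hx; rewrite /= hv.
  have hx2 : forall v, mb x2 v -> size v = l by move=> v hv; apply: hx; rewrite /= hv orbT.
  have hw1 : forall a v b, A a -> mb x1 v -> B b -> wt a + wt v + wt b = j.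
    by move=> a v b ha hv hb; apply: hw => //; rewrite /= hv.
  have hw2 : forall a v b, A a -> mb x2 v -> B b -> wt a + wt v + wt b = j.
    by move=> a v b ha hv hb; apply: hw => //; rewrite /= hv orbT.
  have e1 := IH1 A B o l r j hA0 hB0 hA hB hx1 hw1 hs hl.
  have e2 := IH2 A B o l r j hA0 hB0 hA hB hx2 hw2 hs hl.
  apply: (@leq_trans (cnt A o * (cnt (mb x1) l + cnt (mb x2) l) * cnt B r * G m)).
    by rewrite !leq_mul2r leq_mul2l cnt_union !orbT.
  rewrite mulnDr mulnDl mulnDl /=.
  apply: leq_trans (leq_add e1 e2) _.
  rewrite -mulnDl leq_mul2r; apply/orP; right; lia.
- have [l1 [l2 [hl12 hx1 hx2]]] := concat_len hx.
  have cc := cnt_concat x2 l2 hx1.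
  rewrite -hl12 cc.
  have [a0 ha0] := hA0; have [b0 hb0] := hB0.
  have [v1 hv1] := mb_ne x1; have [v2 hv2] := mb_ne x2.
  case: (leqP l2 l1) => h12.
  +
    set B' := catp l2 (mb x2) B.
    have hB'0 : exists b, B' b.
      exists (v2 ++ b0); rewrite /B' /catp take_size_cat ?drop_size_cat ?hx2 //.
      by rewrite hv2 hb0.
    have hB' : forall b, B' b -> size b = l2 + r.
      move=> b /andP[h1 h2]; rewrite -(cat_take_drop l2 b) size_cat (hx2 _ h1) (hB _ h2) //.
    have hw' : forall a v b, A a -> mb x1 v -> B' b -> wt a + wt v + wt b = j.
      move=> a v b ha hv /andP[h1 h2].
      have := hw a (v ++ take l2 b) (drop l2 b) ha (mb_cat hv h1) h2.
      rewrite -{3}(cat_take_drop l2 b) !wt_cat; lia.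
    have hs' : o + l1 + (l2 + r) = m by lia.
    have eB : cnt B' (l2 + r) = cnt (mb x2) l2 * cnt B r by rewrite /B' cnt_catp.
    have -> : cnt A o * (cnt (mb x1) l1 * cnt (mb x2) l2) * cnt B r * G m =
              cnt A o * cnt (mb x1) l1 * cnt B' (l2 + r) * G m by rewrite eB; ring.
    apply: (@leq_trans (rsize x1 * 2 ^ m)); last by rewrite leq_mul2r /=; apply/orP; right; lia.
    case: (ltnP (2 * m) (3 * l1)) => h3.
    * exact: (IH1 A B' o l1 (l2 + r) j hA0 hB'0 hA hB' hx1 hw' hs' h3).
    * apply: (VL IHm hA0 hB'0 hA hB' hx1 hw' hs') => //; lia.
  +
    set A' := catp o A (mb x1).
    have hA'0 : exists a, A' a.
      exists (a0 ++ v1); rewrite /A' /catp take_size_cat ?drop_size_cat ?hA //.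
      by rewrite hv1 ha0.
    have hA' : forall a, A' a -> size a = o + l1.
      move=> a /andP[h1 h2]; rewrite -(cat_take_drop o a) size_cat (hA _ h1) (hx1 _ h2) //.
    have hw' : forall a v b, A' a -> mb x2 v -> B b -> wt a + wt v + wt b = j.
      move=> a v b /andP[h1 h2] hv hb.
      have := hw (take o a) (drop o a ++ v) b h1 (mb_cat h2 hv) hb.
      rewrite -{3}(cat_take_drop o a) !wt_cat; lia.
    have hs' : o + l1 + l2 + r = m by lia.
    have eA : cnt A' (o + l1) = cnt A o * cnt (mb x1) l1 by rewrite /A' cnt_catp.
    have -> : cnt A o * (cnt (mb x1) l1 * cnt (mb x2) l2) * cnt B r * G m =
              cnt A' (o + l1) * cnt (mb x2) l2 * cnt B r * G m by rewrite eA; ring.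
    apply: (@leq_trans (rsize x2 * 2 ^ m)); last by rewrite leq_mul2r /=; apply/orP; right; lia.
    case: (ltnP (2 * m) (3 * l2)) => h3.
    * exact: (IH2 A' B (o + l1) l2 r j hA'0 hB0 hA' hB hx2 hw' hs' h3).
    * apply: (VL IHm hA'0 hB0 hA' hB hx2 hw' hs') => //; lia.
Qed.

Lemma MC_all m : MC m.
Proof.
elim/ltn_ind: m => m IHm u j hu.
case: (posnP m) => [->|hm].
  rewrite /G kf_small // bin0n /= muln1 expn0 muln1.
  apply: leq_trans (cnt_le _ _) _; rewrite expn0; exact: rsize_pos.
set E : pred (seq bool) := fun w => w == [::].
have hE0 : exists a, E a by exists [::].
have hE : forall a, E a -> size a = 0 by move=> a /eqP ->.
have cE : cnt E 0 = 1 by [].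
have := TL IHm (x:=u) (A:=E) (B:=E) (o:=0) (l:=m) (r:=0) (j:=j) hE0 hE0 hE hE.
rewrite cE mul1n muln1; apply.
- by move=> v /hu[].
- by move=> a v b /eqP-> hv /eqP->; rewrite /wt /= add0n addn0; case: (hu v hv).
- by rewrite addn0.
- lia.
Qed.

Fixpoint ht (h : nat) (w : seq bool) : option nat :=
  match w with
  | [::] => Some h
  | b :: w' => if b then (if h is h'.+1 then ht h' w' else None) else ht h.+1 w'
  end.

Lemma ht_cat h u v : ht h (u ++ v) = obind (fun h' => ht h' v) (ht h u).
Proof. by elim: u h => [|[] u IH] [|h] //=. Qed.

Lemma ht_shift w h e c : ht h w = Some e -> ht (h + c) w = Some (e + c).
Proof. by elim: w h => [|[] w IH] [|h] //= => [[->]|[->]|/IH|/IH|/IH]. Qed.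

Lemma ht_decomp n : forall w h e, size w <= n -> ht h.+1 w = Some e -> e <= h ->
  exists u v, [/\ w = u ++ true :: v, ht 0 u = Some 0 & ht h v = Some e].
Proof.
elim: n => [|n IH] [|b w] h e //=.
- by move=> _ [<-]; rewrite ltnn.
- by move=> _ [<-]; rewrite ltnn.
- move=> hs; case: b.
  + by move=> he _; exists [::], w.
  + move=> he hle.
    have [u1 [v1 [e1 hu1 hv1]]] := IH w h.+1 e hs he (leqW hle).
    have hs1 : size v1 <= n by move: hs; rewrite e1 size_cat /=; lia.
    have [u2 [v2 [e2 hu2 hv2]]] := IH v1 h e hs1 hv1 hle.
    exists (false :: u1 ++ true :: u2), v2; split.
    * by rewrite e1 e2 /= -catA.
    * by rewrite /= ht_cat (ht_shift 1 hu1) /=.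
    * by [].
Qed.

Lemma dyck_of_ht n : forall w, size w <= n -> ht 0 w = Some 0 -> dyck w.
Proof.
elim: n => [|n IH] [|b w] hs hw; try exact: dyck_nil.
- by [].
- case: b hs hw => //= hs hw.
  have [u [v [e hu hv]]] := ht_decomp (leqnn _) hw (leqnn 0).
  have -> : false :: w = app (app [:: false] (app u [:: true])) v.
    by rewrite !appE e /= -catA.
  have hsu : size u <= n by move: hs; rewrite e size_cat /=; lia.
  have hsv : size v <= n by move: hs; rewrite e size_cat /=; lia.
  apply: dyck_cat; [apply: dyck_wrap; exact: IH | exact: IH].
Qed.

Lemma dyck_wt w : dyck w -> wt w * 2 = size w.
Proof.
elim => //= [v w' _ IHv _ IHw|w' _ IHw].
- rewrite appE wt_cat size_cat; lia.
- rewrite appE wt_cat size_cat /= /wt /=; rewrite -/(wt w'); lia.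
Qed.

Definition pz (w : seq bool) : Z := (Z.of_nat (size w) - 2 * Z.of_nat (wt w))%Z.

Lemma pz_cat u v : pz (u ++ v) = (pz u + pz v)%Z.
Proof. rewrite /pz size_cat wt_cat; lia. Qed.

Lemma pz_cons b w : pz (b :: w) = ((if b then -1 else 1) + pz w)%Z.
Proof. rewrite -cat1s pz_cat; case: b => //. Qed.

Lemma ht_ok w : forall h, (forall k, (0 <= Z.of_nat h + pz (take k w))%Z) ->
  ht h w = Some (Z.to_nat (Z.of_nat h + pz w)).
Proof.
elim: w => [|b w IH] h hk /=.
  by rewrite /pz /= Z.add_0_r Nat2Z.id.
have hk' : forall k, (0 <= Z.of_nat h + ((if b then -1 else 1) + pz (take k w)))%Z.
  by move=> k; have := hk k.+1; rewrite /= pz_cons.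
have h1 := hk' 0; rewrite take0 /pz /= in h1.
clear hk; case: b hk' h1 => hk' h1.
- case: h h1 hk' => [|h] h1 hk'; first by lia.
  rewrite IH; first by congr Some; rewrite pz_cons; lia.
  by move=> k; have := hk' k; lia.
- rewrite IH; first by congr Some; rewrite pz_cons; lia.
  by move=> k; have := hk' k; lia.
Qed.

Lemma argmin (f : nat -> Z) N : exists i, i <= N /\ forall k, k <= N -> (f i <= f k)%Z.
Proof.
elim: N => [|N [i [hi hmin]]].
  by exists 0; split => // k; rewrite leqn0 => /eqP ->; lia.
case: (Z.le_gt_cases (f i) (f N.+1)) => h.
- exists i; split; first lia.
  move=> k; rewrite leq_eqVlt => /orP[/eqP->//|hk]; exact: hmin.
- exists N.+1; split => // k; rewrite leq_eqVlt => /orP[/eqP->|hk]; first lia.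
  have := hmin k hk; lia.
Qed.

Lemma take_take' (w : seq bool) k i : take k (take i w) = take (minn k i) w.
Proof.
elim: w k i => [|b w IH] [|k] [|i] //=.
by rewrite IH minnSS.
Qed.

Lemma rot_ok w : pz w = 0%Z -> exists i, i <= size w /\ ht 0 (rot i w) = Some 0.
Proof.
move=> hp.
have [i [hi hmin]] := argmin (fun i => pz (take i w)) (size w).
exists i; split => //.
have hmin' : forall k, (pz (take i w) <= pz (take k w))%Z.
  move=> k; case: (leqP k (size w)) => hk; first exact: hmin.
  by rewrite (take_oversize (ltnW hk)); move: (hmin (size w) (leqnn _)); rewrite take_size.
have hd : pz (drop i w) = (- pz (take i w))%Z.
  have := pz_cat (take i w) (drop i w); rewrite cat_take_drop hp; lia.
rewrite ht_ok.
  by rewrite /rot pz_cat hd Z.add_0_l; congr Some; lia.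
move=> k; rewrite /rot take_cat.
case: ifP => hk.
- have := hmin' (i + k); rewrite takeD pz_cat /=; lia.
- rewrite pz_cat hd take_take'.
  have := hmin' (minn (k - size (drop i w)) i); lia.
Qed.

Definition chk (w : seq bool) := ht 0 w == Some 0.

Lemma cnt_rot i N : cnt (fun w => chk (rot i w)) N = cnt chk N.
Proof.
rewrite /cnt -(count_map (rot i) chk).
apply/permP; apply: uniq_perm.
- by rewrite (map_inj_uniq (@rot_inj i _)) uniq_allw.
- exact: uniq_allw.
- move=> x; rewrite mem_allw; apply/mapP/idP.
  + by move=> [y]; rewrite mem_allw => /eqP <- ->; rewrite size_rot.
  + by move=> /eqP hx; exists (rotr i x); rewrite ?rotrK // mem_allw size_rotr hx.
Qed.

Lemma count_has_le (P : nat -> pred (seq bool)) (s : seq nat) (l : seq (seq bool)) c :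
  (forall i, count (P i) l = c) -> count (fun w => has (fun i => P i w) s) l <= size s * c.
Proof.
move=> hc; elim: s => [|i s IH] /=; first by rewrite count_pred0.
rewrite mulSn -{1}(hc i).
apply: leq_trans _ (leq_add (leqnn _) IH).
rewrite -count_predUI; apply: leq_trans (leq_addr _ _).
by apply: sub_count => w.
Qed.

Lemma dyck_count n : 4 ^ n <= (n.*2.+1) ^ 2 * cnt chk n.*2.
Proof.
have h1 : 'C(n.*2, n) <= n.*2.+1 * cnt chk n.*2.
  rewrite -cnt_wt.
  apply: (@leq_trans (cnt (fun w => has (fun i => chk (rot i w)) (iota 0 n.*2.+1)) n.*2)).
    apply: le_cnt => w sw /eqP hw.
    have hp : pz w = 0%Z by rewrite /pz sw hw -mul2n; lia.
    have [i [hi hr]] := rot_ok hp.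
    apply/hasP; exists i; last by rewrite /chk hr.
    by rewrite mem_iota; lia.
  have := @count_has_le (fun i w => chk (rot i w)) (iota 0 n.*2.+1) (allw n.*2) (cnt chk n.*2).
  by rewrite size_iota; apply => i; exact: cnt_rot.
have h2 := bin_central_low n.
apply: (leq_trans h2).
by rewrite mulnC expnS (mulnC _ (n.*2.+1 ^ 1)) -mulnA leq_mul2l h1 orbT.
Qed.

Lemma length_size (T : Type) (w : list T) : length w = size w.
Proof. by elim: w => //= x w ->. Qed.

Lemma main_nat n r : describes r (D2n n) -> G n.*2 <= (n.*2.+1) ^ 2 * rsize r.
Proof.
move=> hd.
have cw : forall w, mb r w -> size w = n.*2 /\ wt w = n.
  move=> w /mbP /hd [hdy hl].
  have := dyck_wt hdy; rewrite -length_size hl; split; [lia|lia].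
have hm := MC_all cw.
have hc : cnt chk n.*2 <= cnt (mb r) n.*2.
  apply: le_cnt => w sw /eqP hw; apply/mbP/hd; split.
  - exact: (dyck_of_ht (leqnn _) hw).
  - by rewrite length_size sw -mul2n.
have hdc := dyck_count n.
have e : 2 ^ n.*2 = 4 ^ n by rewrite -mul2n expnM.
rewrite e in hm.
have hpos : 0 < 4 ^ n by rewrite expn_gt0.
rewrite -(leq_pmul2r hpos).
apply: (@leq_trans ((n.*2.+1) ^ 2 * cnt chk n.*2 * G n.*2)).
  by rewrite mulnC leq_mul2r hdc orbT.
rewrite -mulnA -mulnA leq_mul2l; apply/orP; right.
apply: leq_trans _ hm; by rewrite leq_mul2r hc orbT.
Qed.

Local Open Scope nat_scope.

Lemma INR_exp2 k : INR (2 ^ k)%N = (2 ^ k)%R.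
Proof.
elim: k => [|k IH] //=.
by rewrite expnS mult_INR IH.
Qed.

Lemma ln2_le1 : (ln 2 <= 1)%R.
Proof.
have h : (2 < exp 1)%R by have := exp_ineq1 1 R1_neq_R0; lra.
have := ln_increasing 2 (exp 1) ltac:(lra) h; rewrite ln_exp; lra.
Qed.

Lemma ln_le' x y : (0 < x)%R -> (x <= y)%R -> (ln x <= ln y)%R.
Proof.
move=> hx hxy; case: (Rle_lt_or_eq_dec _ _ hxy) => h.
- by apply: Rlt_le; apply: ln_increasing.
- by rewrite h; lra.
Qed.

Lemma real_final (n m t T : nat) :
  (1 <= INR n)%R -> (INR n < 2 ^ t.+1)%R ->
  (2 ^ T <= 2 ^ (2 * t + 4) * INR m)%R ->
  ((INR t + 1) * (INR t + 1) + 100 * (2 * INR t + 4) <= 100 * INR T)%R ->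
  (Rpower (INR n) (1/100 * ln (INR n)) <= INR m)%R.
Proof.
move=> hn1 hn hm hT.
have p2 : forall k, (0 < 2 ^ k)%R by move=> k; apply: pow_lt; lra.
have hmpos : (0 < INR m)%R.
  have := p2 T; have := p2 (2 * t + 4)%N => a b.
  case: (Rle_or_lt (INR m) 0) => // h; nra.
have lnm : (INR T * ln 2 <= INR (2 * t + 4) * ln 2 + ln (INR m))%R.
  rewrite -!ln_pow; try lra.
  rewrite -ln_mult //; apply: ln_le' => //.
have lnn : (ln (INR n) <= INR t.+1 * ln 2)%R.
  rewrite -ln_pow; try lra.
  apply: ln_le'; lra.
have lnn0 : (0 <= ln (INR n))%R by rewrite -ln_1; apply: ln_le'; lra.
have l2 := ln2_le1.
have l2p : (0 < ln 2)%R by have := ln_lt_2; lra.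
have eL : INR (2 * t + 4)%N = (2 * INR t + 4)%R.
  rewrite plus_INR; change (muln 2 t) with (Nat.mul 2 t); rewrite mult_INR.
  by rewrite !INR_IZR_INZ.
rewrite eL in lnm.
rewrite S_INR in lnn.
rewrite /Rpower -[X in (_ <= X)%R](exp_ln _ hmpos).
have key : (1 / 100 * ln (INR n) * ln (INR n) <= ln (INR m))%R.
  set L := ln (INR n) in lnn lnn0 *.
  set tt := INR t in hT lnn lnm.
  have ht0 : (0 <= tt)%R by apply: pos_INR.
  have hL2 : (L * L <= (tt + 1) * (tt + 1) * (ln 2 * ln 2))%R by nra.
  nra.
case: (Rle_lt_or_eq_dec _ _ key) => h.
- by apply: Rlt_le; apply: exp_increasing.
- by rewrite h; lra.
Qed.

Lemma bin2_mul K : ('C(K, 2) * 2 = K * K.-1)%N.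
Proof.
elim: K => [|K IH] //.
rewrite binS bin1 mulnDl IH /=; case: K IH => [|K] IH //=; lia.
Qed.

Lemma NI t : (100 <= t)%N -> (t.+1 * t.+1 + 100 * (2 * t + 4) <= 100 * 'C(t.+1 %/ 3, 2))%N.
Proof.
move=> ht.
set K := t.+1 %/ 3.
have hK : (t.+1 <= 3 * K + 2)%N by rewrite /K; lia.
have hK2 : (33 <= K)%N by rewrite /K; lia.
have e := bin2_mul K.
have : ((t.+1 * t.+1 + 100 * (2 * t + 4)) * 2 <= 100 * ('C(K, 2) * 2))%N; last by lia.
rewrite e.
have -> : (K.-1 = K - 1)%N by lia.
nia.
Qed.

Open Scope R_scope.

Theorem corollary5p4 :
  exists c : R, 0 < c /\ exists N : nat, forall n : nat, (N <= n)%coq_nat ->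
    forall m : nat, is_rpn (D2n n) m ->
      Rpower (INR n) (c * ln (INR n)) <= INR m.
Proof.
exists (1/100); split; first lra.
exists (2 ^ 100)%N => n /leP hN m [[r [hd hs]] _].
have n1 : (1 <= n)%N by apply: leq_trans hN; rewrite expn_gt0.
set t := trunc_log 2 n.
have t100 : (100 <= t)%N by apply: trunc_log_max.
have hlt : (n < 2 ^ t.+1)%N by apply: trunc_log_ltn.
have hmain := main_nat hd.
rewrite /G /kf -/(double n) trunc_log2_double // -/t hs in hmain.
set T := 'C(t.+1 %/ 3, 2) in hmain.
have h2 : ((n.*2.+1) ^ 2 <= 2 ^ (2 * t + 4))%N.
  have : (n.*2.+1 <= 2 ^ t.+2)%N by rewrite expnS -mul2n; lia.
  rewrite -(leq_sqr) => h; apply: leq_trans h _.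
  by rewrite -expnM; apply: leq_pexp2l => //; lia.
have hnat : (2 ^ T <= 2 ^ (2 * t + 4) * m)%N.
  apply: leq_trans hmain _; by rewrite leq_mul2r h2 orbT.
apply: (@real_final n m t T).
- by apply: (le_INR 1 n); apply/leP.
- by rewrite -INR_exp2; apply: lt_INR; apply/ltP.
- rewrite -!INR_exp2.
  have := le_INR _ _ (elimT leP hnat).
  by change (muln (2 ^ (2 * t + 4)) m) with (Nat.mul (2 ^ (2 * t + 4)) m); rewrite mult_INR.
- have := le_INR _ _ (elimT leP (NI t100)).
  rewrite -/T.
  have E1 : INR (t.+1 * t.+1 + 100 * (2 * t + 4))%N =
            (INR t + 1) * (INR t + 1) + 100 * (2 * INR t + 4).
    rewrite !INR_IZR_INZ.
    have -> : Z.of_nat (t.+1 * t.+1 + 100 * (2 * t + 4))%N =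
      ((Z.of_nat t + 1) * (Z.of_nat t + 1) + 100 * (2 * Z.of_nat t + 4))%Z by lia.
    by rewrite !plus_IZR !mult_IZR !plus_IZR mult_IZR.
  have E2 : INR (100 * T)%N = 100 * INR T.
    rewrite !INR_IZR_INZ.
    have -> : Z.of_nat (100 * T)%N = (100 * Z.of_nat T)%Z by lia.
    by rewrite mult_IZR.
  by rewrite E1 E2.
Qed.
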